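(* For all integers $n\geq0$ and $m\geq1$, we have $a_{2m}^{\star}(n)\equiv 0 \pmod{2m}$.
   Context: A partition is self-conjugate if its Young diagram is symmetric about the main diagonal. The hook length of the cell $(i,j)$ of a Young diagram is the number of cells to its right in row $i$ plus the number below it in column $j$ plus $1$; $n_t(\lambda)$ is the number of cells of $\lambda$ with hook length $t$. Define $a_t^{\star}(n)=\sum n_t(\lambda)$, the sum over all self-conjugate partitions $\lambda$ of $n$ (so $a_t^\star(0)=0$). *)

(* Defs.v *)
From mathcomp Require Import all_boot all_order.
Set Implicit Arguments. Unset Strict Implicit. Unset Printing Implicit Defensive.

(* A partition of n is encoded as a nonincreasing n-tuple of parts in 'I_(n+1)
   (padded with trailing zeros) whose entries sum to n.  This is in bijection
   with integer partitions of n (a partition of n has at most n parts, each <= n). *)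

Definition part_of (n : nat) (t : n.-tuple 'I_n.+1) (i : nat) : nat :=
  nth 0 (map (@nat_of_ord n.+1) t) i.

Definition is_partition (n : nat) (t : n.-tuple 'I_n.+1) : bool :=
  [forall i : 'I_n, forall j : 'I_n, (i <= j) ==> (part_of t j <= part_of t i)]
  && (\sum_(i < n) part_of t i == n).

Definition conj_part (n : nat) (t : n.-tuple 'I_n.+1) (j : nat) : nat :=
  #|[pred k : 'I_n | j < part_of t k]|.

Definition self_conjugate (n : nat) (t : n.-tuple 'I_n.+1) : bool :=
  [forall j : 'I_n, conj_part t j == part_of t j].

(* hook length of cell (i,j) (0-indexed):
   arm = lambda_i - j - 1, leg = lambda'_j - i - 1, hook = arm + leg + 1 *)
Definition hook (n : nat) (t : n.-tuple 'I_n.+1) (i j : nat) : nat :=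
  (part_of t i - j - 1) + (conj_part t j - i - 1) + 1.

Definition in_diagram (n : nat) (t : n.-tuple 'I_n.+1) (i j : nat) : bool :=
  j < part_of t i.

Definition nhook (n : nat) (t : n.-tuple 'I_n.+1) (h : nat) : nat :=
  #|[pred c : 'I_n * 'I_n.+1 | in_diagram t c.1 c.2 && (hook t c.1 c.2 == h)]|.

Definition astar (h n : nat) : nat :=
  \sum_(t : n.-tuple 'I_n.+1 | is_partition t && self_conjugate t) nhook t h.

(* Main.v *)
Require Import Defs.
From mathcomp Require Import all_boot all_order.
From mathcomp Require Import zify.
Set Implicit Arguments. Unset Strict Implicit. Unset Printing Implicit Defensive.


Lemma card_bij_in (T U : finType) (A : {set T}) (B : {set U}) (f : T -> U) (g : U -> T) :
  {in A, forall x, f x \in B} -> {in B, forall y, g y \in A} ->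
  {in A, cancel f g} -> {in B, cancel g f} -> #|A| = #|B|.
Proof.
move=> fAB gBA fK gK; apply/eqP; rewrite eqn_leq; apply/andP; split.
- rewrite -(card_in_imset (f:=f) (D:=A)); last by move=> x y xA yA /(congr1 g); rewrite !fK.
  by apply: subset_leq_card; apply/subsetP=> y /imsetP[x xA ->]; exact: fAB.
- rewrite -(card_in_imset (f:=g) (D:=B)); last by move=> x y xA yA /(congr1 f); rewrite !gK.
  by apply: subset_leq_card; apply/subsetP=> y /imsetP[x xA ->]; exact: gBA.
Qed.

Lemma sum_card_pairs (T U : finType) (c : pred T) (F : T -> U -> bool) :
  \sum_(x | c x) \sum_(y : U) (F x y : nat) = #|[set p : T * U | c p.1 && F p.1 p.2]|.
Proof.
rewrite pair_big_dep /= -sum1_card /= big_mkcond [RHS]big_mkcond /=.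
apply: eq_bigr => p _; rewrite inE; by case: (c p.1); case: (F p.1 p.2).
Qed.

Definition inP K (P : {set 'I_K}) (x : nat) : bool := [exists k in P, val k == x].

Lemma inPE K (P : {set 'I_K}) (k : 'I_K) : inP P k = (k \in P).
Proof.
apply/idP/idP => [/existsP[z /andP[zP /eqP zk]] | kP].
  by have -> : k = z by apply: val_inj.
by apply/existsP; exists k; rewrite kP eqxx.
Qed.

Lemma inP_lt K (P : {set 'I_K}) x : inP P x -> x < K.
Proof. by rewrite /inP => /existsP[z /andP[_ /eqP <-]]; exact: ltn_ord. Qed.

Lemma inP_U1 K (P : {set 'I_K}) (a : 'I_K) x : inP (a |: P) x = (val a == x) || inP P x.
Proof.
apply/idP/idP.
- rewrite /inP => /existsP[z /andP[]]; rewrite in_setU1 => /orP[/eqP -> -> // | zP zx].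
  by rewrite orbC; apply/orP; left; apply/existsP; exists z; rewrite zP.
- case/orP => [/eqP ax | ].
  + by rewrite /inP; apply/existsP; exists a; rewrite in_setU1 eqxx ax eqxx.
  + rewrite /inP => /existsP[z /andP[zP zx]]; apply/existsP; exists z.
    by rewrite in_setU1 zP orbT.
Qed.

Lemma inP_D1 K (P : {set 'I_K}) (a : 'I_K) x : inP (P :\ a) x = (val a != x) && inP P x.
Proof.
apply/idP/idP.
- rewrite /inP => /existsP[z /andP[]]; rewrite in_setD1 => /andP[za zP] /eqP zx.
  apply/andP; split; last by apply/existsP; exists z; rewrite zP zx eqxx.
  by rewrite -zx; apply: contra za => /eqP/val_inj ->.
- case/andP => ax; rewrite /inP => /existsP[z /andP[zP /eqP zx]]; apply/existsP; exists z.
  rewrite in_setD1 zP zx eqxx !andbT; apply: contra ax => /eqP <-; by rewrite zx.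
Qed.

Lemma inP_ext K (A B : {set 'I_K}) : (forall x, inP A x = inP B x) -> A = B.
Proof. by move=> h; apply/setP => z; rewrite -!inPE h. Qed.

Lemma sum_inP K (P : {set 'I_K}) (F : nat -> nat) :
  \sum_(k in P) F k = \sum_(0 <= k < K) inP P k * F k.
Proof.
rewrite big_mkord big_mkcond; apply: eq_bigr => k _; rewrite inPE.
by case: (k \in P); rewrite ?mul1n ?mul0n.
Qed.

Definition sz K (P : {set 'I_K}) := \sum_(k in P) (2 * k + 1).

Lemma sz_le K (P : {set 'I_K}) (k : 'I_K) : k \in P -> 2 * k + 1 <= sz P.
Proof. by move=> kP; rewrite /sz (big_setD1 _ kP) /= leq_addr. Qed.

Lemma sz_le2 K (P : {set 'I_K}) (k l : 'I_K) : k \in P -> l \in P -> k != l ->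
  (2 * k + 1) + (2 * l + 1) <= sz P.
Proof.
move=> kP lP kl; rewrite /sz (big_setD1 _ kP) /= leq_add2l.
have lP' : l \in P :\ k by rewrite !inE eq_sym kl.
by rewrite (big_setD1 _ lP') /= leq_addr.
Qed.

Lemma sz_D1 K (P : {set 'I_K}) (k : 'I_K) : k \in P -> sz P = 2 * k + 1 + sz (P :\ k).
Proof. by move=> kP; rewrite /sz (big_setD1 _ kP). Qed.

Lemma sz_U1 K (P : {set 'I_K}) (k : 'I_K) : k \notin P -> sz (k |: P) = 2 * k + 1 + sz P.
Proof. by move=> kP; rewrite /sz (big_setU1 _ kP). Qed.


Definition alpha K t (P : {set 'I_K}) := \sum_(k in P) ((t <= k) && ~~ inP P (k - t) : nat).
Definition beta K t (P : {set 'I_K}) := \sum_(k in P) ((k < t) && inP P (t - 1 - k) : nat).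
Definition alpha' K t (P : {set 'I_K}) := \sum_(k in P) (~~ inP P (k + t) : nat).
Definition beta' K t (P : {set 'I_K}) := \sum_(k : 'I_K | k < t) (~~ inP P k && ~~ inP P (t - 1 - k) : nat).
Definition qq K t (P : {set 'I_K}) := \sum_(k in P) (k < t : nat).
Definition Dh K t (P : {set 'I_K}) :=
  \sum_(k in P) (2 * ((t <= k) && ~~ inP P (k - t)) + ((k < t) && inP P (t - 1 - k))).

Lemma Dh_split K t (P : {set 'I_K}) : Dh t P = 2 * alpha t P + beta t P.
Proof. by rewrite /Dh big_split /= -big_distrr. Qed.

Lemma sum_lt_cut K t (F : nat -> nat) : t <= K ->
  \sum_(0 <= k < K) ((k < t) * F k) = \sum_(0 <= k < t) F k.
Proof.
move=> tK; rewrite (big_nat_widen 0 t K) // [RHS]big_mkcond /=.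
by apply: eq_bigr => i _; case: (i < t); rewrite ?mul1n ?mul0n.
Qed.

Lemma sum_shift t K (F : nat -> nat) :
  \sum_(t <= i < K) F i = \sum_(0 <= i < K - t) F (i + t).
Proof. by have := big_addn 0 K t xpredT F; rewrite add0n. Qed.

Lemma alpha'_eq K t (P : {set 'I_K}) : alpha' t P = alpha t P + qq t P.
Proof.
have key : \sum_(k in P) (inP P (k + t) : nat) = \sum_(k in P) ((t <= k) && inP P (k - t) : nat).
  rewrite (sum_inP P (fun k => inP P (k + t) : nat)).
  rewrite (sum_inP P (fun k => (t <= k) && inP P (k - t) : nat)).
  case: (leqP t K) => tK; last first.
    rewrite big1_seq; last first.
      move=> i; rewrite mem_index_iota => iK.
      have -> : inP P (i + t) = false by apply/negbTE/negP => /inP_lt; lia.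
      by rewrite muln0.
    rewrite big1_seq // => i; rewrite mem_index_iota => iK.
    have -> : (t <= i) = false by lia.
    by rewrite muln0.
  rewrite (@big_cat_nat _ _ _ (K - t) 0 K) ?leq_subr //=.
  rewrite [X in _ + X]big1_seq ?addn0; last first.
    move=> i; rewrite mem_index_iota => hi.
    have -> : inP P (i + t) = false by apply/negbTE/negP => /inP_lt; lia.
    by rewrite muln0.
  rewrite [RHS](@big_cat_nat _ _ _ t 0 K) //=.
  have -> : \sum_(0 <= i < t) inP P i * ((t <= i) && inP P (i - t)) = 0.
    rewrite big1_seq // => i; rewrite mem_index_iota => it.
    by rewrite (_ : (t <= i) = false) ?muln0 //; lia.
  rewrite add0n [RHS]sum_shift.
  apply: eq_big_nat => i _; rewrite addnK (_ : t <= i + t) ?leq_addl //=; by rewrite mulnC.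
have h1 : alpha' t P + \sum_(k in P) (inP P (k + t) : nat) = \sum_(k in P) 1.
  by rewrite -big_split /=; apply: eq_bigr => k _; case: (inP P _).
have h2 : \sum_(k in P) 1 = qq t P + \sum_(k in P) ((t <= k) && inP P (k - t) : nat) + alpha t P.
  rewrite /qq /alpha -!big_split /=; apply: eq_bigr => k _.
  by case: (leqP t k) => tk; case: (inP P _).
lia.
Qed.

Lemma beta'_eq K t (P : {set 'I_K}) : t <= K -> beta' t P + 2 * qq t P = t + beta t P.
Proof.
move=> tK.
have eb' : beta' t P = \sum_(0 <= k < t) (~~ inP P k && ~~ inP P (t - 1 - k) : nat).
  rewrite /beta' -(sum_lt_cut _ tK) big_mkord [LHS]big_mkcond /=.
  by apply: eq_bigr => i _; case: (i < t); rewrite ?mul1n ?mul0n.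
have eq : qq t P = \sum_(0 <= k < t) (inP P k : nat).
  rewrite /qq (sum_inP P (fun k => (k < t) : nat)) -(sum_lt_cut _ tK); apply: eq_bigr => i _; by rewrite mulnC.
have eb : beta t P = \sum_(0 <= k < t) (inP P k && inP P (t - 1 - k) : nat).
  rewrite /beta (sum_inP P (fun k => (k < t) && inP P (t - 1 - k) : nat)) -(sum_lt_cut _ tK); apply: eq_bigr => i _.
  by case: (i < t); case: (inP P i); case: (inP P _).
have rev : \sum_(0 <= k < t) (inP P (t - 1 - k) : nat) = \sum_(0 <= k < t) (inP P k : nat).
  rewrite [RHS]big_nat_rev /=; apply: eq_big_nat => i /andP[_ it].
  by rewrite add0n (_ : t - i.+1 = t - 1 - i) //; lia.
have pt : \sum_(0 <= k < t) (~~ inP P k && ~~ inP P (t - 1 - k) : nat)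
     + \sum_(0 <= k < t) (inP P k : nat) + \sum_(0 <= k < t) (inP P (t - 1 - k) : nat)
   = \sum_(0 <= k < t) 1 + \sum_(0 <= k < t) (inP P k && inP P (t - 1 - k) : nat).
  rewrite -!big_split /=; apply: eq_bigr => i _.
  by case: (inP P i); case: (inP P _).
move: pt; rewrite rev sum_nat_const_nat muln1 subn0 -eb -eb' -eq; lia.
Qed.

Lemma Dh_step K t (P : {set 'I_K}) : t <= K -> 2 * alpha' t P + beta' t P = Dh t P + t.
Proof. move=> tK; have := beta'_eq P tK; rewrite Dh_split alpha'_eq; lia. Qed.


Lemma sum_in_cond (T : finType) (P : {set T}) (b : T -> bool) :
  \sum_(k in P) (b k : nat) = \sum_k ((k \in P) && b k : nat).
Proof. by rewrite big_mkcond; apply: eq_bigr => k _; case: (k \in P). Qed.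

Lemma sum_cond (T : finType) (c : pred T) (b : T -> bool) :
  \sum_(k | c k) (b k : nat) = \sum_k (c k && b k : nat).
Proof. by rewrite big_mkcond; apply: eq_bigr => k _; case: (c k). Qed.

Lemma swap1 (T : finType) (P : {set T}) a b : a \in P -> b \notin P ->
  a |: ((b |: (P :\ a)) :\ b) = P.
Proof.
move=> aP bP; apply/setP => z; rewrite !(in_setU1, in_setD1).
case: (eqVneq z a) => za; case: (eqVneq z b) => zb; try subst z;
  rewrite ?eqxx ?aP ?(negbTE bP) /= ?andbF ?orbF ?orbT //.
Qed.

Lemma swap2 (T : finType) (P : {set T}) a b : a \in P -> b \in P ->
  a |: (b |: ((P :\ a) :\ b)) = P.
Proof.
move=> aP bP; apply/setP => z; rewrite !(in_setU1, in_setD1).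
case: (eqVneq z a) => za; case: (eqVneq z b) => zb; try subst z;
  rewrite ?eqxx ?aP ?bP /= ?andbF ?orbF ?orbT //.
Qed.

Lemma swap3 (T : finType) (P : {set T}) a b : a \notin P -> b \notin P ->
  ((a |: (b |: P)) :\ a) :\ b = P.
Proof.
move=> aP bP; apply/setP => z; rewrite !(in_setU1, in_setD1).
case: (eqVneq z a) => za; case: (eqVneq z b) => zb; try subst z;
  rewrite ?eqxx ?(negbTE aP) ?(negbTE bP) /= ?andbF ?orbF ?orbT //.
Qed.

Section Slide.
End Slide.

Definition Aa K t N := [set p : {set 'I_K.+1} * 'I_K.+1 |
  (sz p.1 == N) && ((p.2 \in p.1) && ((t <= p.2) && ~~ inP p.1 (p.2 - t)))].
Definition Ba K t N := [set p : {set 'I_K.+1} * 'I_K.+1 |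
  (sz p.1 == N) && ((p.2 \in p.1) && ~~ inP p.1 (p.2 + t))].
Definition Ab K t N := [set p : {set 'I_K.+1} * 'I_K.+1 |
  (sz p.1 == N) && ((p.2 \in p.1) && ((p.2 < t) && inP p.1 (t - 1 - p.2)))].
Definition Bb K t N := [set p : {set 'I_K.+1} * 'I_K.+1 |
  (sz p.1 == N) && ((p.2 < t) && (~~ inP p.1 p.2 && ~~ inP p.1 (t - 1 - p.2)))].

Lemma sumAa K t N : \sum_(P : {set 'I_K.+1} | sz P == N) alpha t P = #|Aa K t N|.
Proof.
rewrite (eq_bigr (fun P : {set 'I_K.+1} => \sum_(k : 'I_K.+1) ((k \in P) && ((t <= k) && ~~ inP P (k - t)) : nat))); last by move=> P _; rewrite /alpha sum_in_cond.
exact: (sum_card_pairs (fun P : {set 'I_K.+1} => sz P == N) (fun P (k : 'I_K.+1) => (k \in P) && ((t <= k) && ~~ inP P (k - t)))).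
Qed.
Lemma sumBa K t N : \sum_(P : {set 'I_K.+1} | sz P == N) alpha' t P = #|Ba K t N|.
Proof.
rewrite (eq_bigr (fun P : {set 'I_K.+1} => \sum_(k : 'I_K.+1) ((k \in P) && ~~ inP P (k + t) : nat))); last by move=> P _; rewrite /alpha' sum_in_cond.
exact: (sum_card_pairs (fun P : {set 'I_K.+1} => sz P == N) (fun P (k : 'I_K.+1) => (k \in P) && ~~ inP P (k + t))).
Qed.
Lemma sumAb K t N : \sum_(P : {set 'I_K.+1} | sz P == N) beta t P = #|Ab K t N|.
Proof.
rewrite (eq_bigr (fun P : {set 'I_K.+1} => \sum_(k : 'I_K.+1) ((k \in P) && ((k < t) && inP P (t - 1 - k)) : nat))); last by move=> P _; rewrite /beta sum_in_cond.
exact: (sum_card_pairs (fun P : {set 'I_K.+1} => sz P == N) (fun P (k : 'I_K.+1) => (k \in P) && ((k < t) && inP P (t - 1 - k)))).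
Qed.
Lemma sumBb K t N : \sum_(P : {set 'I_K.+1} | sz P == N) beta' t P = #|Bb K t N|.
Proof.
rewrite (eq_bigr (fun P : {set 'I_K.+1} => \sum_(k : 'I_K.+1) ((k < t) && (~~ inP P k && ~~ inP P (t - 1 - k)) : nat))); last by move=> P _; rewrite /beta' sum_cond.
exact: (sum_card_pairs (fun P : {set 'I_K.+1} => sz P == N) (fun P (k : 'I_K.+1) => (k < t) && (~~ inP P k && ~~ inP P (t - 1 - k)))).
Qed.

Lemma cardA_a K t N : 0 < t -> N + 2 * t <= K -> #|Aa K t (N + 2 * t)| = #|Ba K t N|.
Proof.
move=> t0 NK.
pose f (p : {set 'I_K.+1} * 'I_K.+1) :=
  let k2 := (inord (p.2 - t) : 'I_K.+1) in (k2 |: (p.1 :\ p.2), k2).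
pose g (p : {set 'I_K.+1} * 'I_K.+1) :=
  let k3 := (inord (p.2 + t) : 'I_K.+1) in (k3 |: (p.1 :\ p.2), k3).
have hA : forall P (k : 'I_K.+1), (P, k) \in Aa K t (N + 2 * t) ->
   [/\ sz P = N + 2 * t, k \in P, t <= k, ~~ inP P (k - t) & nat_of_ord (inord (k - t) : 'I_K.+1) = k - t].
  move=> P k; rewrite inE /= => /and4P[/eqP -> kP tk nk]; split => //.
  by rewrite inordK //; have := ltn_ord k; lia.
have hB : forall P (k : 'I_K.+1), (P, k) \in Ba K t N ->
   [/\ sz P = N, k \in P, ~~ inP P (k + t) & nat_of_ord (inord (k + t) : 'I_K.+1) = k + t].
  move=> P k; rewrite inE /= => /and3P[/eqP szP kP nk]; split => //.
  by rewrite inordK //; have := sz_le kP; lia.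
apply: (card_bij_in (f := f) (g := g)).
- move=> [P k] /hA[szP kP tk nk v2]; rewrite /f /= inE /=.
  set k2 := (inord (k - t) : 'I_K.+1).
  have k2P : k2 \notin P :\ k by rewrite -inPE inP_D1 v2 (negbTE nk) andbF.
  rewrite sz_U1 // setU11 inP_U1 inP_D1 v2 /=.
  have := sz_D1 kP; rewrite szP => e.
  apply/andP; split; first by apply/eqP; lia.
  rewrite subnK // eqxx /= orbF. apply/eqP => e2; move: v2; rewrite -/k2 e2; lia.
- move=> [P k] /hB[szP kP nk v3]; rewrite /g /= inE /=.
  set k3 := (inord (k + t) : 'I_K.+1).
  have k3P : k3 \notin P :\ k by rewrite -inPE inP_D1 v3 (negbTE nk) andbF.
  rewrite sz_U1 // setU11 inP_U1 inP_D1 v3 /=.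
  have := sz_D1 kP; rewrite szP => e.
  rewrite (_ : k + t - t = k); last by lia.
  apply/and3P; split; [by apply/eqP; lia | by rewrite leq_addl | ].
  rewrite eqxx /= orbF; apply/eqP => e3; move: v3; rewrite -/k3 e3; lia.
- move=> [P k] /hA[szP kP tk nk v2]; rewrite /f /g /=.
  have e : (inord ((inord (k - t) : 'I_K.+1) + t) : 'I_K.+1) = k.
    by apply: val_inj; rewrite /= v2 inordK; have := ltn_ord k; lia.
  rewrite e swap1 //; rewrite -inPE v2 //.
- move=> [P k] /hB[szP kP nk v3]; rewrite /f /g /=.
  have e : (inord ((inord (k + t) : 'I_K.+1) - t) : 'I_K.+1) = k.
    by apply: val_inj; rewrite /= v3 inordK; have := ltn_ord k; lia.
  rewrite e swap1 //; rewrite -inPE v3 //.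
Qed.

Lemma cardA_b K t N s : t = 2 * s -> N + 2 * t <= K -> #|Ab K t (N + 2 * t)| = #|Bb K t N|.
Proof.
move=> ts NK.
pose f (p : {set 'I_K.+1} * 'I_K.+1) :=
  ((p.1 :\ p.2) :\ (inord (t - 1 - p.2) : 'I_K.+1), p.2).
pose g (p : {set 'I_K.+1} * 'I_K.+1) :=
  (p.2 |: ((inord (t - 1 - p.2) : 'I_K.+1) |: p.1), p.2).
have vk : forall k : 'I_K.+1, k < t -> nat_of_ord (inord (t - 1 - k) : 'I_K.+1) = t - 1 - k.
  by move=> k kt; rewrite inordK //; lia.
apply: (card_bij_in (f := f) (g := g)).
- move=> [P k]; rewrite inE /= => /and4P[/eqP szP kP kt ik].
  rewrite /f inE /=; set k2 := (inord (t - 1 - k) : 'I_K.+1).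
  have v2 := vk k kt; rewrite -/k2 in v2.
  have k2P : k2 \in P :\ k.
    rewrite -inPE inP_D1 /= v2 ik andbT. rewrite /=; apply/eqP; lia.
  have := sz_D1 kP; have := sz_D1 k2P; rewrite szP => e1 e2.
  rewrite kt !inP_D1 /= v2 eqxx /= ?andbF ?andbT /=.
  apply/andP; split; first by apply/eqP; lia.
  by rewrite eqxx.
- move=> [P k]; rewrite inE /= => /and4P[/eqP szP kt nk nk2].
  rewrite /g inE /=; set k2 := (inord (t - 1 - k) : 'I_K.+1).
  have v2 := vk k kt; rewrite -/k2 in v2.
  have k2P : k2 \notin P by rewrite -inPE v2.
  have kP : k \notin k2 |: P.
    rewrite -inPE inP_U1 /= v2 (negbTE nk) orbF; apply/eqP; lia.
  rewrite sz_U1 // sz_U1 // szP setU11 kt inP_U1 inP_U1 /= v2 eqxx orbT /=.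
  apply/eqP; lia.
- move=> [P k]; rewrite inE /= => /and4P[/eqP szP kP kt ik].
  rewrite /f /g /=; set k2 := (inord (t - 1 - k) : 'I_K.+1).
  have v2 := vk k kt; rewrite -/k2 in v2.
  congr (_, _); apply: swap2 => //; by rewrite -inPE v2.
- move=> [P k]; rewrite inE /= => /and4P[/eqP szP kt nk nk2].
  rewrite /f /g /=; set k2 := (inord (t - 1 - k) : 'I_K.+1).
  have v2 := vk k kt; rewrite -/k2 in v2.
  congr (_, _); apply: swap3; first by rewrite -inPE.
  by rewrite -inPE v2.
Qed.

Definition Wsum K t N := \sum_(P : {set 'I_K.+1} | sz P == N) Dh t P.

Lemma Wsum_small K t N s : t = 2 * s -> N < 2 * t -> Wsum K t N = 0.
Proof.
move=> ts Nt; rewrite /Wsum big1 // => P /eqP szP.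
rewrite /Dh big1 // => k kP.
have hk := sz_le kP.
have -> : (t <= k) = false by lia.
case: (boolP ((k < t) && inP P (t - 1 - k))) => [/andP[kt ik] | _]; last by [].
exfalso.
have v2 : nat_of_ord (inord (t - 1 - k) : 'I_K.+1) = t - 1 - k.
  by rewrite inordK //; have := inP_lt ik; lia.
have k2P : (inord (t - 1 - k) : 'I_K.+1) \in P by rewrite -inPE v2.
have ne : k != inord (t - 1 - k).
  by apply/eqP => e; move: v2; rewrite -e; lia.
have := sz_le2 kP k2P ne; rewrite v2; lia.
Qed.

Lemma Wsum_step K t N s : t = 2 * s -> 0 < t -> N + 2 * t <= K ->
  Wsum K t (N + 2 * t) = Wsum K t N + t * #|[set P : {set 'I_K.+1} | sz P == N]|.
Proof.
move=> ts t0 NK.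
have tK : t <= K by lia.
rewrite /Wsum (eq_bigr (fun P => 2 * alpha t P + beta t P)); last by move=> P _; rewrite Dh_split.
rewrite big_split /= -big_distrr /= sumAa sumAb cardA_a // (cardA_b ts) //.
rewrite -sumBa -sumBb big_distrr -big_split /=.
rewrite (eq_bigr (fun P => Dh t P + t)); last by move=> P _; apply: Dh_step; lia.
rewrite big_split /= sum_nat_const mulnC; congr (_ + _); congr (_ * _).
by apply: eq_card => P; rewrite inE.
Qed.

Lemma Wsum_mod K t s : t = 2 * s -> 0 < t -> forall N, N <= K -> Wsum K t N %% t = 0.
Proof.
move=> ts t0 N; elim: N {-2}N (leqnn N) => [|M IH] N NM NK.
  by rewrite (@Wsum_small K t N s) // ?mod0n //; lia.
case: (ltnP N (2 * t)) => Nt; first by rewrite (@Wsum_small K t N s) // mod0n.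
have -> : N = (N - 2 * t) + 2 * t by lia.
rewrite (@Wsum_step K t (N - 2 * t) s) //; last by lia.
by rewrite -modnDm modnMr addn0 modn_mod IH //; lia.
Qed.


Lemma sum_cut V W (F : nat -> nat) : V <= W -> (forall i, V <= i -> i < W -> F i = 0) ->
  \sum_(0 <= i < W) F i = \sum_(0 <= i < V) F i.
Proof.
move=> VW h; rewrite (@big_cat_nat _ _ _ V 0 W) //= [X in _ + X]big1_seq ?addn0 //.
by move=> i; rewrite mem_index_iota => hi; apply: h; lia.
Qed.

Lemma sum_lt_count W c : c <= W -> \sum_(0 <= i < W) (i < c : nat) = c.
Proof.
move=> cW; rewrite (@sum_cut c) //; last by move=> i ci _; rewrite ltnNge ci.
rewrite (eq_big_nat _ _ (F2 := fun _ => 1)); last by move=> i /andP[_ ->].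
by rewrite sum_nat_const_nat muln1 subn0.
Qed.

Lemma shift_sum W i (F : nat -> nat) : (forall d, W <= i + d -> F d = 0) ->
  \sum_(0 <= j < W) ((i <= j) * F (j - i)) = \sum_(0 <= d < W) F d.
Proof.
move=> hF; case: (leqP i W) => iW; last first.
  rewrite !big1_seq // => j; rewrite mem_index_iota => hj.
  - by apply: hF; lia.
  - by rewrite (_ : (i <= j) = false) //; lia.
rewrite (@big_cat_nat _ _ _ i 0 W) //= big1_seq ?add0n; last first.
  by move=> j; rewrite mem_index_iota => hj; rewrite (_ : (i <= j) = false) //; lia.
rewrite sum_shift [RHS](@sum_cut (W - i)) ?leq_subr //; last by move=> d h1 h2; apply: hF; lia.
apply: eq_big_nat => d _; rewrite addnK leq_addl mul1n //.
Qed.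

Lemma dc_count W (p : nat -> bool) : (forall i j, i <= j -> p j -> p i) ->
  (forall j, p j -> j < W) -> forall j, p j = (j < \sum_(0 <= i < W) (p i : nat)).
Proof.
move=> dc bd j; case: (boolP (p j)) => pj.
- have jW := bd _ pj.
  rewrite (@big_cat_nat _ _ _ j.+1 0 W) //=.
  have -> : \sum_(0 <= i < j.+1) (p i : nat) = j.+1.
    rewrite (eq_big_nat _ _ (F2 := fun _ => 1)); last by move=> i /andP[_ ij]; rewrite (dc i j).
    by rewrite sum_nat_const_nat muln1 subn0.
  by symmetry; apply/idP; lia.
- symmetry; apply/negbTE; rewrite -leqNgt.
  case: (leqP j W) => jW.
  + rewrite (@sum_cut j) //; last by move=> i ji _; case: (boolP (p i)) => // pi; case/negP: pj; exact: (dc j i ji pi).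
    have := @leq_sum _ (index_iota 0 j) (fun _ => true) (fun i => (p i : nat)) (fun _ => 1) (fun i _ => leq_b1 (p i)).
    by rewrite sum_nat_const_nat muln1 subn0.
  + have := @leq_sum _ (index_iota 0 W) (fun _ => true) (fun i => (p i : nat)) (fun _ => 1) (fun i _ => leq_b1 (p i)).
    rewrite sum_nat_const_nat muln1 subn0; lia.
Qed.

Definition cnt K (P : {set 'I_K}) d := \sum_(k in P) (d <= k : nat).

Lemma sum_eqd K (P : {set 'I_K}) d : \sum_(k in P) (val k == d : nat) = inP P d.
Proof.
case: (boolP (inP P d)) => [|nd].
- rewrite /inP => /existsP[k0 /andP[k0P /eqP e]].
  rewrite (big_setD1 k0) //= e eqxx big1 // => k; rewrite in_setD1 => /andP[kk0 _].
  apply/eqP; rewrite eqb0; apply: contra kk0 => /eqP ke; apply/eqP/val_inj; by rewrite /= ke e.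
- rewrite big1 // => k kP; apply/eqP; rewrite eqb0; apply: contra nd => /eqP <-.
  by rewrite inPE.
Qed.

Lemma cnt_step K (P : {set 'I_K}) d : cnt P d = cnt P d.+1 + inP P d.
Proof.
rewrite /cnt -sum_eqd -big_split /=; apply: eq_bigr => k _; lia.
Qed.

Lemma cnt_anti K (P : {set 'I_K}) d d' : d <= d' -> cnt P d' <= cnt P d.
Proof. move=> dd; apply: leq_sum => k _; lia. Qed.

Lemma cnt_pos K (P : {set 'I_K.+1}) d : 0 < cnt P d -> d <= K.
Proof.
move=> h; rewrite leqNgt; apply/negP => Kd; move: h.
rewrite /cnt big1 // => k _; have := ltn_ord k; lia.
Qed.

Lemma cnt_card K (P : {set 'I_K.+1}) d : cnt P d <= K.+1.
Proof.
apply: leq_trans (_ : \sum_(k in P) 1 <= K.+1).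
  by apply: leq_sum => k _; case: (d <= k).
by rewrite sum1_card; apply: leq_trans (max_card _) _; rewrite card_ord.
Qed.

Lemma cnt_sz K (P : {set 'I_K}) d : (2 * d + 1) * cnt P d <= sz P.
Proof.
rewrite /cnt big_distrr /=; apply: leq_sum => k _; case: (leqP d k) => h /=; lia.
Qed.

Definition cell K (P : {set 'I_K}) i j := minn i j < cnt P (maxn i j - minn i j).

Lemma cell_sym K (P : {set 'I_K}) i j : cell P i j = cell P j i.
Proof. by rewrite /cell minnC maxnC. Qed.

Lemma cell_step K (P : {set 'I_K}) i j : cell P i j.+1 -> cell P i j.
Proof.
rewrite /cell; case: (leqP j.+1 i) => h.
- have e1 : minn i j = j by lia.
  have e2 : maxn i j = i by lia.
  rewrite e1 e2.
  rewrite (_ : i - j = (i - j.+1).+1); last by lia.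
  have := cnt_step P (i - j.+1); lia.
- have e1 : minn i j = i by lia.
  have e2 : maxn i j = j by lia.
  rewrite e1 e2.
  have := @cnt_anti _ P (j - i) (j.+1 - i); lia.
Qed.

Lemma cell_le_r K (P : {set 'I_K}) i j j' : j' <= j -> cell P i j -> cell P i j'.
Proof.
move=> jj; rewrite -(subnK jj); elim: (j - j') => [|e IH] //= h.
by apply: IH; apply: cell_step; rewrite -addSn.
Qed.

Lemma cell_le_l K (P : {set 'I_K}) i i' j : i' <= i -> cell P i j -> cell P i' j.
Proof. by move=> ii; rewrite cell_sym => h; rewrite cell_sym; apply: cell_le_r h. Qed.

Lemma cell_bound K (P : {set 'I_K}) i j : cell P i j -> maxn i j < sz P.
Proof.
rewrite /cell => h; have := cnt_sz P (maxn i j - minn i j).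
set c := cnt P _ in h *; set d := maxn i j - minn i j.
have : d + minn i j = maxn i j by rewrite /d; lia.
nia.
Qed.

Lemma cell_window K (P : {set 'I_K.+1}) i j : cell P i j -> maxn i j < K.*2.+1.
Proof.
rewrite /cell => h; have := cnt_card P (maxn i j - minn i j).
have := @cnt_pos K P (maxn i j - minn i j); lia.
Qed.

Lemma cell_split K (P : {set 'I_K}) i j :
  (cell P i j : nat) = (i <= j) * (i < cnt P (j - i)) + (j < i) * (j < cnt P (i - j)).
Proof.
rewrite /cell; case: (leqP i j) => h; lia.
Qed.

Lemma cells_total K (P : {set 'I_K.+1}) :
  \sum_(0 <= i < K.*2.+1) \sum_(0 <= j < K.*2.+1) (cell P i j : nat) = sz P.
Proof.
set W := K.*2.+1.
have zero : forall i d, W <= i + d -> (i < cnt P d : nat) = 0.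
  move=> i d h; apply/eqP; rewrite eqb0 -leqNgt.
  have := cnt_card P d; have := @cnt_pos K P d; rewrite /W; lia.
rewrite (eq_bigr (fun i => \sum_(0 <= j < W) ((i <= j) * (i < cnt P (j - i))) +
    \sum_(0 <= j < W) ((j < i) * (j < cnt P (i - j))))); last first.
  by move=> i _; rewrite -big_split /=; apply: eq_bigr => j _; rewrite cell_split.
rewrite big_split /=.
have U : \sum_(0 <= i < W) \sum_(0 <= j < W) ((i <= j) * (i < cnt P (j - i)))
         = \sum_(0 <= d < W) cnt P d.
  rewrite (eq_bigr (fun i => \sum_(0 <= d < W) (i < cnt P d : nat))); last first.
    by move=> i _; apply: (shift_sum (F := fun d => (i < cnt P d : nat))) => d; apply: zero.
  rewrite exchange_big_nat; apply: eq_bigr => d _; apply: sum_lt_count.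
  by apply: leq_trans (cnt_card P d) _; rewrite /W; lia.
have L : \sum_(0 <= i < W) \sum_(0 <= j < W) ((j < i) * (j < cnt P (i - j)))
         = \sum_(0 <= d < W) (0 < d) * cnt P d.
  rewrite exchange_big_nat.
  rewrite (eq_bigr (fun j => \sum_(0 <= d < W) ((0 < d) && (j < cnt P d) : nat))); last first.
    move=> j _; rewrite -(@shift_sum W j (fun d => ((0 < d) && (j < cnt P d) : nat))); last first.
      by move=> d h; have := zero j d h; lia.
    by apply: eq_bigr => i _; lia.
  rewrite exchange_big_nat; apply: eq_bigr => d _.
  case: d => [|d]; first by rewrite big1.
  rewrite mul1n (@sum_lt_count W (cnt P d.+1)) //.
  by apply: leq_trans (cnt_card P _) _; rewrite /W; lia.
rewrite U L -big_split /=.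
rewrite (eq_bigr (fun d => \sum_(k in P) ((d <= k) + (0 < d) * (d <= k)))); last first.
  by move=> d _; rewrite /cnt big_distrr -big_split.
rewrite exchange_big /sz; apply: eq_bigr => k _.
change (\sum_(0 <= d < W) ((d <= k) + (0 < d) * (d <= k)) = 2 * k + 1).
have kW : k.+1 <= W by have := ltn_ord k; rewrite /W; lia.
have h1 := sum_lt_count kW.
have h2 : \sum_(0 <= d < W) (d < 1 : nat) = 1 by apply: sum_lt_count; rewrite /W.
have : \sum_(0 <= d < W) ((d <= k) + (0 < d) * (d <= k)) + \sum_(0 <= d < W) (d < 1 : nat)
       = \sum_(0 <= d < W) (d < k.+1 : nat) + \sum_(0 <= d < W) (d < k.+1 : nat).
  rewrite -!big_split /=; apply: eq_bigr => d _; lia.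
lia.
Qed.


Lemma part_le n (l : n.-tuple 'I_n.+1) i : part_of l i <= n.
Proof.
rewrite /part_of; case: (ltnP i n) => h.
- rewrite (nth_map ord0) ?size_tuple //; by rewrite -ltnS ltn_ord.
- by rewrite nth_default // size_map size_tuple.
Qed.

Lemma part_ge n (l : n.-tuple 'I_n.+1) i : n <= i -> part_of l i = 0.
Proof. by move=> h; rewrite /part_of nth_default // size_map size_tuple. Qed.

Lemma part_tnth n (l : n.-tuple 'I_n.+1) (i : 'I_n) : part_of l i = tnth l i.
Proof. by rewrite /part_of (nth_map ord0) ?size_tuple // -tnth_nth. Qed.

Lemma conj_partE n (l : n.-tuple 'I_n.+1) j :
  conj_part l j = \sum_(0 <= k < n) (j < part_of l k : nat).
Proof.
rewrite /conj_part -sum1_card big_mkcond big_mkord /=; apply: eq_bigr => k _.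
by rewrite inE; case: (j < _).
Qed.

Definition SCP n (l : n.-tuple 'I_n.+1) := is_partition l && self_conjugate l.

Lemma scp_mono n (l : n.-tuple 'I_n.+1) i j : SCP l -> i <= j -> part_of l j <= part_of l i.
Proof.
case/andP=> /andP[/forallP hm _] _ ij.
case: (ltnP j n) => jn; last by rewrite part_ge.
have in_ : i < n by lia.
by have := hm (Ordinal in_) => /forallP /(_ (Ordinal jn)) /implyP /(_ ij).
Qed.

Lemma scp_sum n (l : n.-tuple 'I_n.+1) : SCP l -> \sum_(0 <= i < n) part_of l i = n.
Proof. by case/andP=> /andP[_ /eqP h] _; rewrite big_mkord. Qed.

Lemma scp_conj n (l : n.-tuple 'I_n.+1) j : SCP l -> j < n -> conj_part l j = part_of l j.
Proof. by case/andP=> _ /forallP h jn; apply/eqP; exact: (h (Ordinal jn)). Qed.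

Lemma scp_sym n (l : n.-tuple 'I_n.+1) i j : SCP l -> (j < part_of l i) = (i < part_of l j).
Proof.
move=> hl; case: (ltnP j n) => jn; last first.
  have := part_le l i; rewrite (part_ge l jn) ltn0 => h; apply/negbTE; rewrite -leqNgt; lia.
rewrite -(scp_conj hl jn) conj_partE; apply: (@dc_count n (fun k => j < part_of l k)).
- by move=> a b ab h; apply: leq_trans h (scp_mono hl ab).
- move=> k h; case: (ltnP k n) => // kn; move: h; rewrite part_ge //.
Qed.

Definition phi n (l : n.-tuple 'I_n.+1) : {set 'I_n.+1} :=
  [set k : 'I_n.+1 | [exists i : 'I_n, part_of l i == i + k + 1]].

Definition Dset n (l : n.-tuple 'I_n.+1) : {set 'I_n} := [set i : 'I_n | i < part_of l i].

Lemma phi_img n (l : n.-tuple 'I_n.+1) :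
  phi l = [set (inord (part_of l i - i - 1) : 'I_n.+1) | i : 'I_n in Dset l].
Proof.
apply/setP => k; rewrite inE; apply/existsP/imsetP.
- case=> i /eqP e; exists i; first by rewrite inE e; lia.
  by apply: val_inj; rewrite /= inordK e; [lia | have := ltn_ord k; lia].
- case=> i; rewrite inE => hi ->; exists i; apply/eqP.
  by rewrite inordK; [lia | have := part_le l i; lia].
Qed.

Lemma phi_inj n (l : n.-tuple 'I_n.+1) : SCP l ->
  {in Dset l &, injective (fun i : 'I_n => (inord (part_of l i - i - 1) : 'I_n.+1))}.
Proof.
move=> hl i j; rewrite !inE => hi hj /(congr1 val) /=.
rewrite !inordK; try (have := part_le l i; have := part_le l j; lia).
move=> e; apply: val_inj => /=.
case: (leqP i j) => h; [have := scp_mono hl h | have := scp_mono hl (ltnW h)]; lia.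
Qed.

Lemma sumphi n (l : n.-tuple 'I_n.+1) (F : nat -> nat) : SCP l ->
  \sum_(k in phi l) F k = \sum_(i : 'I_n | i < part_of l i) F (part_of l i - i - 1).
Proof.
move=> hl; rewrite phi_img (big_imset (fun k : 'I_n.+1 => F k)) /=; last exact: phi_inj.
apply: eq_big => i; first by rewrite inE.
rewrite inE => hi; rewrite inordK //; have := part_le l i; lia.
Qed.

Lemma card_phi n (l : n.-tuple 'I_n.+1) : SCP l -> #|phi l| = #|Dset l|.
Proof. by move=> hl; rewrite phi_img card_in_imset //; exact: phi_inj. Qed.

Lemma cnt_phi n (l : n.-tuple 'I_n.+1) d : SCP l ->
  cnt (phi l) d = \sum_(0 <= i < n) (i + d + 1 <= part_of l i : nat).
Proof.
move=> hl; rewrite /cnt (sumphi (fun k => (d <= k : nat))) // big_mkord [RHS](bigID (fun i : 'I_n => i < part_of l i)) /=.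
rewrite [X in _ = _ + X]big1 ?addn0; last by move=> i hi; lia.
by apply: eq_bigr => i hi; lia.
Qed.

Lemma lt_cnt_phi n (l : n.-tuple 'I_n.+1) s d : SCP l ->
  (s < cnt (phi l) d) = (s + d + 1 <= part_of l s).
Proof.
move=> hl; rewrite cnt_phi //; symmetry.
apply: (@dc_count n (fun i => i + d + 1 <= part_of l i)).
- move=> a b ab h; have := scp_mono hl ab; lia.
- move=> k h; case: (ltnP k n) => // kn; move: h; rewrite part_ge //; lia.
Qed.

Lemma cell_phi n (l : n.-tuple 'I_n.+1) i j : SCP l -> cell (phi l) i j = (j < part_of l i).
Proof.
move=> hl; rewrite /cell; case: (leqP i j) => h.
- rewrite lt_cnt_phi //; congr (_ <= _); lia.
- rewrite lt_cnt_phi // scp_sym //; congr (_ <= _); lia.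
Qed.

Lemma sz_phi n (l : n.-tuple 'I_n.+1) : SCP l -> sz (phi l) = n.
Proof.
move=> hl; rewrite -cells_total.
rewrite (eq_bigr (fun i => part_of l i)); last first.
  move=> i _; rewrite (eq_bigr (fun j => (j < part_of l i : nat))); last by move=> j _; rewrite cell_phi.
  by apply: sum_lt_count; have := part_le l i; lia.
rewrite (@sum_cut n) ?scp_sum //; first lia.
by move=> i ni _; rewrite part_ge.
Qed.

Lemma no_one n (l : n.-tuple 'I_n.+1) i j : SCP l -> part_of l i + part_of l j != i + j + 1.
Proof.
move=> hl; case: (ltnP j (part_of l i)) => h.
- have := h; rewrite scp_sym // => h2; lia.
- have : ~~ (i < part_of l j) by rewrite -scp_sym // -leqNgt.
  rewrite -leqNgt; lia.
Qed.

Lemma ysum n (l : n.-tuple 'I_n.+1) c : SCP l ->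
  \sum_(j : 'I_n | ~~ (j < part_of l j)) (j - part_of l j == c : nat) = (c < n) && ~~ inP (phi l) c.
Proof.
move=> hl.
pose h2 (j : 'I_n) := (inord (j - part_of l j) : 'I_n.+1).
have v2 : forall j : 'I_n, nat_of_ord (h2 j) = j - part_of l j.
  by move=> j; rewrite inordK //; have := ltn_ord j; lia.
have inj : {in ~: Dset l &, injective h2}.
  move=> i j; rewrite !inE -!leqNgt => hi hj /(congr1 val) /=; rewrite v2 v2 => e.
  apply: val_inj => /=.
  case: (leqP i j) => h; [have := scp_mono hl h | have := scp_mono hl (ltnW h)]; lia.
set Cset := [set k : 'I_n.+1 | (k < n) && (k \notin phi l)].
have eqY : h2 @: (~: Dset l) = Cset.
  apply/eqP; rewrite eqEcard; apply/andP; split.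
  - apply/subsetP => k /imsetP[j jD ->]; rewrite inE; apply/andP; split.
      by rewrite v2; have := ltn_ord j; lia.
    apply/negP; rewrite inE => /existsP[i /eqP e].
    move: jD; rewrite !inE -leqNgt => jD.
    have := no_one i j hl; rewrite e v2; lia.
  - rewrite card_in_imset //.
    have hc := cardsC (Dset l); rewrite card_ord in hc.
    have hphi := card_phi hl.
    have dis : [disjoint Cset & phi l].
      rewrite -setI_eq0; apply/eqP/setP => k; rewrite !inE.
      by case: [exists i, _]; rewrite ?andbF ?andbT.
    have sub : Cset :|: phi l \subset [set~ (ord_max : 'I_n.+1)].
      apply/subsetP => k; rewrite !inE => /orP[/andP[kn _] | ].
        by apply/eqP => e; move: kn; rewrite e /=; lia.
      move/existsP=> [i /eqP e]; apply/eqP => ek; have := part_le l i; rewrite e ek /=; lia.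
    have := subset_leq_card sub; rewrite cardsC1 card_ord /= cardsU.
    move: dis; rewrite -setI_eq0 => /eqP ->; rewrite cards0 subn0 => h; rewrite hphi in h. rewrite /reverse_coercion in hc h *. set a := #|~: Dset l| in hc *. set b := #|Dset l| in hc h *. set c0 := #|Cset| in h *. lia.
rewrite (eq_bigl (fun j => j \in ~: Dset l)); last by move=> j; rewrite !inE.
rewrite (eq_bigr (fun j => (nat_of_ord (h2 j) == c : nat))); last by move=> j _; rewrite v2.
rewrite -(big_imset (fun k : 'I_n.+1 => (nat_of_ord k == c : nat))) /=; last exact: inj.
rewrite eqY sum_eqd.
congr (nat_of_bool _); apply/idP/idP.
- rewrite {1}/inP => /existsP[k /andP[]]; rewrite inE => /andP[kn kP] /eqP <-.
  by rewrite kn inPE.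
- case/andP=> cn nc.
  have vc : nat_of_ord (inord c : 'I_n.+1) = c by rewrite inordK //; lia.
  rewrite -vc inPE inE vc cn /= -inPE vc //.
Qed.

Lemma phi_lt n (l : n.-tuple 'I_n.+1) (k : 'I_n.+1) : k \in phi l -> k < n.
Proof. rewrite inE => /existsP[i /eqP e]; have := part_le l i; lia. Qed.

Lemma inP_phi_lt n (l : n.-tuple 'I_n.+1) x : inP (phi l) x -> x < n.
Proof. rewrite /inP => /existsP[k /andP[kP /eqP <-]]; exact: (phi_lt kP). Qed.

Lemma nhook_sum n (l : n.-tuple 'I_n.+1) t : SCP l -> 0 < t ->
  nhook l t = \sum_(i : 'I_n) \sum_(j : 'I_n) (part_of l i + part_of l j == i + j + t + 1 : nat).
Proof.
move=> hl t0; rewrite /nhook -sum1_card big_mkcond /= -(pair_bigA _ (fun (i : 'I_n) (j : 'I_n.+1) =>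
   if (in_diagram l i j && (hook l i j == t)) then 1 else 0)) /=.
apply: eq_bigr => i _; rewrite big_ord_recr /=.
rewrite (_ : in_diagram l i n = false) ?addn0; last first.
  by rewrite /in_diagram; have := part_le l i; lia.
apply: eq_bigr => j _; rewrite /in_diagram /hook /= scp_conj //.
case: (ltnP j (part_of l i)) => h.
- have := h; rewrite scp_sym // => h2; rewrite /=; case: eqP; lia.
- have : ~~ (i < part_of l j) by rewrite -scp_sym // -leqNgt.
  rewrite -leqNgt => h2; rewrite /=; lia.
Qed.

Lemma nhook_eq n (l : n.-tuple 'I_n.+1) t s : SCP l -> t = 2 * s -> 0 < t ->
  nhook l t = Dh t (phi l).
Proof.
move=> hl ts t0; rewrite nhook_sum //.
set E := fun i j : 'I_n => ((part_of l i) + (part_of l j) == i + j + t + 1 : nat).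
change (\sum_(i : 'I_n) \sum_(j : 'I_n) E i j = Dh t (phi l)).
have Esym : forall i j, E i j = E j i by move=> i j; rewrite /E; lia.
rewrite (bigID (fun i : 'I_n => i < (part_of l i))) /=.
rewrite (eq_bigr (fun i : 'I_n => \sum_(j : 'I_n | j < (part_of l j)) E i j + \sum_(j : 'I_n | ~~ (j < (part_of l j))) E i j)); last first.
  by move=> i _; rewrite (bigID (fun j : 'I_n => j < (part_of l j))).
rewrite [X in _ + X](eq_bigr (fun i : 'I_n => \sum_(j : 'I_n | j < (part_of l j)) E i j + \sum_(j : 'I_n | ~~ (j < (part_of l j))) E i j)); last first.
  by move=> i _; rewrite (bigID (fun j : 'I_n => j < (part_of l j))).
rewrite !big_split /=.
have CC : \sum_(i : 'I_n | ~~ (i < (part_of l i))) \sum_(j : 'I_n | ~~ (j < (part_of l j))) E i j = 0.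
  rewrite big1 // => i hi; rewrite big1 // => j hj; rewrite /E; lia.
have DC : \sum_(i : 'I_n | i < (part_of l i)) \sum_(j : 'I_n | ~~ (j < (part_of l j))) E i j = alpha t (phi l).
  rewrite (eq_bigr (fun i : 'I_n => (t <= (part_of l i) - i - 1) * (((part_of l i) - i - 1 - t < n) && ~~ inP (phi l) ((part_of l i) - i - 1 - t)))); last first.
    move=> i hi; rewrite -ysum //.
    rewrite big_distrr /=; apply: eq_bigr => j hj; rewrite /E; case: (leqP t ((part_of l i) - i - 1)) => h; lia.
  rewrite /alpha -(sumphi (fun k => (t <= k) * ((k - t < n) && ~~ inP (phi l) (k - t)))) //.
  apply: eq_bigr => k kP; have := phi_lt kP; case: (t <= k); lia.
have CD : \sum_(i : 'I_n | ~~ (i < (part_of l i))) \sum_(j : 'I_n | j < (part_of l j)) E i j = alpha t (phi l).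
  rewrite exchange_big /= -DC; apply: eq_bigr => i _; apply: eq_bigr => j _; exact: Esym.
have DD : \sum_(i : 'I_n | i < (part_of l i)) \sum_(j : 'I_n | j < (part_of l j)) E i j = beta t (phi l).
  rewrite (eq_bigr (fun i : 'I_n => ((part_of l i) - i - 1 < t) * inP (phi l) (t - 1 - ((part_of l i) - i - 1)))); last first.
    move=> i hi; rewrite -sum_eqd big_distrr /=.
    rewrite (sumphi (fun k => ((part_of l i) - i - 1 < t) * (k == t - 1 - ((part_of l i) - i - 1)))) //.
    apply: eq_bigr => j hj; rewrite /E; case: (ltnP ((part_of l i) - i - 1) t) => h; lia.
  rewrite /beta -(sumphi (fun k => (k < t) * inP (phi l) (t - 1 - k))) //.
  by apply: eq_bigr => k _; case: (k < t); case: (inP _ _).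
rewrite CC DC CD DD Dh_split; lia.
Qed.


Definition rowlen n (P : {set 'I_n.+1}) i := \sum_(0 <= j < n.*2.+1) (cell P i j : nat).
Definition Lam n (P : {set 'I_n.+1}) : n.-tuple 'I_n.+1 :=
  [tuple (inord (rowlen P i) : 'I_n.+1) | i < n].

Lemma rowlen_cell n (P : {set 'I_n.+1}) i j : cell P i j = (j < rowlen P i).
Proof.
apply: (@dc_count n.*2.+1 (fun j => cell P i j)).
- by move=> a b ab; apply: cell_le_r.
- by move=> k /cell_window; lia.
Qed.

Lemma rowlen_le n (P : {set 'I_n.+1}) i : sz P = n -> rowlen P i <= n.
Proof.
move=> szP; rewrite leqNgt; apply/negP; rewrite -rowlen_cell => /cell_bound; lia.
Qed.

Lemma rowlen_ge n (P : {set 'I_n.+1}) i : sz P = n -> n <= i -> rowlen P i = 0.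
Proof.
move=> szP ni; apply/eqP; rewrite -leqn0 leqNgt; apply/negP.
rewrite -rowlen_cell => /cell_bound; lia.
Qed.

Lemma part_Lam n (P : {set 'I_n.+1}) i : sz P = n -> part_of (Lam P) i = rowlen P i.
Proof.
move=> szP; case: (ltnP i n) => h.
- rewrite (part_tnth (Lam P) (Ordinal h)) tnth_mktuple inordK //.
  by have := rowlen_le (Ordinal h) szP; lia.
- by rewrite part_ge // rowlen_ge.
Qed.

Lemma rowlen_mono n (P : {set 'I_n.+1}) i i' : i <= i' -> rowlen P i' <= rowlen P i.
Proof.
move=> ii; rewrite leqNgt; apply/negP => h.
have := h; rewrite -rowlen_cell => /(cell_le_l ii); rewrite rowlen_cell ltnn.
by [].
Qed.

Lemma Lam_SCP n (P : {set 'I_n.+1}) : sz P = n -> SCP (Lam P).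
Proof.
move=> szP; apply/andP; split; [apply/andP; split|].
- apply/forallP => i; apply/forallP => j; apply/implyP => ij.
  by rewrite !part_Lam //; apply: rowlen_mono.
- rewrite (eq_bigr (fun i : 'I_n => rowlen P i)); last by move=> i _; rewrite part_Lam.
  rewrite -(big_mkord xpredT (rowlen P)) -(@sum_cut n n.*2.+1); first by rewrite cells_total szP.
    by lia.
  by move=> i ni _; rewrite rowlen_ge.
- apply/forallP => j; rewrite conj_partE part_Lam //; apply/eqP.
  rewrite (eq_bigr (fun k => (cell P j k : nat))); last first.
    by move=> k _; rewrite part_Lam // -rowlen_cell cell_sym.
  rewrite /rowlen [RHS](@sum_cut n) //; first by lia.
  move=> i ni _; apply/eqP; rewrite eqb0; apply/negP => /cell_bound; lia.
Qed.

Lemma cell_diag n (P : {set 'I_n.+1}) i k : cell P i (i + k) = (i < cnt P k).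
Proof.
have e1 : minn i (i + k) = i by lia.
have e2 : maxn i (i + k) = i + k by lia.
by rewrite /cell e1 e2 addKn.
Qed.

Lemma phi_Lam n (P : {set 'I_n.+1}) : sz P = n -> phi (Lam P) = P.
Proof.
move=> szP; apply/setP => k; rewrite inE; apply/existsP/idP.
- case=> i /eqP; rewrite part_Lam // => e.
  have h1 : cell P i (i + k) by rewrite rowlen_cell e; lia.
  have h2 : ~~ cell P i (i + k.+1) by rewrite rowlen_cell e; lia.
  move: h1 h2; rewrite !cell_diag => h1 h2.
  have := cnt_step P k; rewrite -inPE; case: (inP P k) => //; lia.
- move=> kP.
  have cs := cnt_step P k; rewrite inPE kP /= in cs.
  have csz := cnt_sz P k; rewrite szP in csz.
  have ck : cnt P k <= n by apply: leq_trans csz; rewrite leq_pmull // addn1.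
  have i0n : cnt P k.+1 < n by lia.
  exists (Ordinal i0n); rewrite part_Lam //= ; apply/eqP.
  have h1 : cell P (cnt P k.+1) (cnt P k.+1 + k) by rewrite cell_diag; lia.
  have h2 : ~~ cell P (cnt P k.+1) (cnt P k.+1 + k.+1) by rewrite cell_diag; lia.
  move: h1 h2; rewrite !rowlen_cell; lia.
Qed.

Lemma Lam_phi n (l : n.-tuple 'I_n.+1) : SCP l -> Lam (phi l) = l.
Proof.
move=> hl; apply: eq_from_tnth => i; apply: val_inj.
rewrite tnth_mktuple /= -part_tnth inordK.
- rewrite /rowlen (eq_bigr (fun j => (j < part_of l i : nat))); last by move=> j _; rewrite cell_phi.
  by apply: sum_lt_count; have := part_le l i; lia.
- rewrite /rowlen (eq_bigr (fun j => (j < part_of l i : nat))); last by move=> j _; rewrite cell_phi.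
  by rewrite sum_lt_count; have := part_le l i; lia.
Qed.

Theorem astar_mod (n m : nat) : 1 <= m -> astar (2 * m) n %% (2 * m) = 0.
Proof.
move=> m1; set t := 2 * m.
have t0 : 0 < t by rewrite /t; lia.
have -> : astar t n = Wsum n t n.
  rewrite /astar /Wsum.
  rewrite (eq_bigl (fun l : n.-tuple 'I_n.+1 => l \in (@Lam n) @: [set P : {set 'I_n.+1} | sz P == n])); last first.
    move=> l; apply/idP/imsetP.
    - move=> hl; exists (phi l); first by rewrite inE sz_phi.
      by rewrite Lam_phi.
    - case=> P; rewrite inE => /eqP szP ->; exact: Lam_SCP.
  rewrite big_imset /=; last first.
    move=> P Q; rewrite !inE => /eqP hP /eqP hQ e.
    by rewrite -(phi_Lam hP) -(phi_Lam hQ) e.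
  apply: eq_big => P; first by rewrite inE.
  rewrite inE => /eqP szP.
  rewrite (@nhook_eq n (Lam P) t m) // ?phi_Lam //; exact: Lam_SCP.
exact: (@Wsum_mod n t m).
Qed.


Unset Implicit Arguments.

Theorem corollary1p3 (n m : nat) : 1 <= m -> astar (2 * m) n = 0 %[mod 2 * m].
Proof.
move=> m1; by rewrite mod0n astar_mod.
Qed.
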